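(* Skeptic can weakly force each of the events \[ E_5:=\{\xi:\ s_n>\sqrt n-1\ \text{for infinitely many } n\},\qquad E_6:=\{\xi:\ s_n<-\sqrt n+1\ \text{for infinitely many } n\}. \]
   Context: Fair-coin game: in rounds $n=1,2,\dots$ Skeptic announces $M_n\in\mathbb{R}$ (depending only on $x_1,\dots,x_{n-1}$), then Reality announces $x_n\in\{-1,1\}$. A path is an infinite sequence $\xi=x_1x_2\cdots\in\{-1,1\}^{\mathbb{N}}$, and $\Omega$ is the set of paths. We write $s_n:=x_1+\cdots+x_n$, with $s_0=0$. The capital process of a strategy with zero initial capital is $\mathcal{K}^{\mathcal{P}}_n=\sum_{k=1}^nM_kx_k$. Skeptic weakly forces $E\subseteq\Omega$ if some strategy $\mathcal{P}$ has $\mathcal{K}^{\mathcal{P}}_n(\xi)\ge-1$ for all $\xi\in\Omega$ and $n\ge0$, and $\limsup_n\mathcal{K}^{\mathcal{P}}_n(\xi)=\infty$ for every $\xi\notin E$. *)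

(* Defs.v *)
From Stdlib Require Import Reals List.
Open Scope R_scope.

(* Reality's moves: a path is xi : nat -> bool, where xi k is the move of
   round k+1; true encodes x = 1, false encodes x = -1. *)
Definition path := nat -> bool.

Definition mv (b : bool) : R := if b then 1 else -1.

Definition x (xi : path) (n : nat) : R := mv (xi (n - 1)%nat).

Fixpoint s (xi : path) (n : nat) : R :=
  match n with
  | O => 0
  | S m => s xi m + mv (xi m)
  end.

Definition prefix (xi : path) (n : nat) : list bool := map xi (seq 0 n).

(* A strategy: M_n depends only on x_1..x_{n-1}, given as the list of them. *)
Definition strategy := list bool -> R.

Fixpoint capital (P : strategy) (xi : path) (n : nat) : R :=
  match n with
  | O => 0
  | S m => capital P xi m + P (prefix xi m) * mv (xi m)
  end.

(* limsup_n K_n = +infinity, i.e. K is unbounded above *)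
Definition limsup_infty (K : nat -> R) : Prop :=
  forall C : R, forall N : nat, exists n, (N <= n)%nat /\ K n > C.

Definition weakly_forces (E : path -> Prop) : Prop :=
  exists P : strategy,
    (forall xi n, capital P xi n >= -1) /\
    (forall xi, ~ E xi -> limsup_infty (capital P xi)).

Definition infinitely_often (Q : nat -> Prop) : Prop :=
  forall N : nat, exists n, (N <= n)%nat /\ Q n.

Definition E5 (xi : path) : Prop :=
  infinitely_often (fun n => s xi n > sqrt (INR n) - 1).

Definition E6 (xi : path) : Prop :=
  infinitely_often (fun n => s xi n < - sqrt (INR n) + 1).

(* Main.v *)
Require Import Defs.
From Stdlib Require Import Reals List Lra Lia Psatz Classical.
Open Scope R_scope.

Definition c5 : R := 5/4.
Definition F (s : R) (n : nat) : R := ln (c5 * sqrt (INR n) - s) - ln (INR n) / 4.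
Definition Fmin : R := ln (1/8).

Lemma ln_le' : forall x y, 0 < x -> x <= y -> ln x <= ln y.
Proof. intros x y Hx Hxy. destruct (Req_dec x y) as [->|Hne]; [lra|].
  left. apply ln_increasing; lra. Qed.

Lemma ln_sq : forall n : nat, (1 <= n)%nat -> ln (INR n) = 2 * ln (sqrt (INR n)).
Proof. intros n Hn. assert (H1 : 1 <= INR n) by (apply (le_INR 1 n) in Hn; simpl in Hn; lra).
  assert (Hs : 0 < sqrt (INR n)) by (apply sqrt_lt_R0; lra).
  rewrite <- (sqrt_sqrt (INR n)) at 1 by lra. rewrite ln_mult by lra. ring. Qed.

Lemma sqrt_ge : forall n : nat, forall k, 0 <= k -> k * k <= INR n -> k <= sqrt (INR n).
Proof. intros n k Hk H. rewrite <- (sqrt_square k) by lra. apply sqrt_le_1_alt. lra. Qed.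

Lemma Flow3 : forall s n, (1 <= n)%nat -> s <= sqrt (INR n) -> ln (1/4) + ln (INR n) / 4 <= F s n.
Proof. intros s n Hn Hs. unfold F. rewrite ln_sq by lia.
  set (b := sqrt (INR n)) in *.
  assert (Hb : 1 <= b) by (apply sqrt_ge; [lra| apply (le_INR 1 n) in Hn; simpl in Hn; lra]).
  assert (ln (b/4) <= ln (c5 * b - s)) by (apply ln_le'; unfold c5; lra).
  assert (ln (b/4) = ln b + ln (1/4)) by (unfold Rdiv; rewrite ln_mult by lra; rewrite ln_mult by lra; rewrite ln_1; ring).
  assert (0 <= ln b) by (rewrite <- ln_1; apply ln_le'; lra).
  lra. Qed.

Lemma Flow2 : forall s n, (63 <= n)%nat -> s <= sqrt (INR n) + 1 -> Fmin <= F s (S n).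
Proof. intros s n Hn Hs. unfold F, Fmin. rewrite ln_sq by lia.
  assert (HI : 64 <= INR (S n)) by (apply le_INR in Hn; rewrite S_INR; simpl in *; lra).
  set (a := sqrt (INR (S n))) in *.
  assert (Ha : 8 <= a) by (apply sqrt_ge; lra).
  assert (Hba : sqrt (INR n) <= a) by (apply sqrt_le_1_alt; rewrite S_INR; lra).
  assert (ln (a/8) <= ln (c5 * a - s)) by (apply ln_le'; unfold c5; lra).
  assert (ln (a/8) = ln a + ln (1/8)) by (unfold Rdiv; rewrite ln_mult by lra; rewrite ln_mult by lra; rewrite ln_1; ring).
  assert (0 <= ln a) by (rewrite <- ln_1; apply ln_le'; lra).
  lra. Qed.

Lemma Fsuper : forall s n, (64 <= n)%nat -> s <= sqrt (INR n) ->
  (F (s+1) (S n) + F (s-1) (S n)) / 2 <= F s n.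
Proof. intros s n Hn Hs. unfold F. rewrite (ln_sq (S n)) by lia. rewrite (ln_sq n) by lia.
  assert (HI : 64 <= INR n) by (apply le_INR in Hn; simpl in *; lra).
  assert (Hab : sqrt (INR (S n)) * sqrt (INR (S n)) = sqrt (INR n) * sqrt (INR n) + 1)
    by (rewrite sqrt_sqrt, sqrt_sqrt, S_INR; try lra; try apply pos_INR).
  set (a := sqrt (INR (S n))) in *. set (b := sqrt (INR n)) in *.
  assert (Hb : 8 <= b) by (apply sqrt_ge; lra).
  assert (Ha0 : 0 <= a) by apply sqrt_pos.
  assert (Hba : b <= a) by nra.
  assert (H169 : 9 * a <= 16 * b) by nra.
  assert (P1 : 0 < c5 * a - (s + 1)) by (unfold c5; lra).
  assert (P2 : 0 < c5 * a - (s - 1)) by (unfold c5; lra).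
  assert (P3 : 0 < c5 * b - s) by (unfold c5; lra).
  assert (Hpoly : b * ((c5 * a - (s + 1)) * (c5 * a - (s - 1))) <= a * ((c5 * b - s) * (c5 * b - s))).
  { assert (Hid : a * ((c5 * b - s) * (c5 * b - s)) - b * ((c5 * a - (s + 1)) * (c5 * a - (s - 1)))
       = (a - b) * (s*s + b * (b - 9/16 * a)) + b * (1 + b*b - a*a)) by (unfold c5; field).
    assert (0 <= (a - b) * (s*s + b * (b - 9/16 * a))).
    { apply Rmult_le_pos; [lra|]. assert (0 <= b * (b - 9/16*a)) by (apply Rmult_le_pos; lra). nra. }
    rewrite Hab in Hid. lra. }
  apply ln_le' in Hpoly; [| apply Rmult_lt_0_compat; [lra| apply Rmult_lt_0_compat; lra]].
  rewrite !ln_mult in Hpoly by (try apply Rmult_lt_0_compat; lra).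
  lra. Qed.

Definition Nst : nat := 64.
Record st := mk { t : nat; sm : R; Wc : R; act : bool; lam : R }.

Definition bet (q : st) : R :=
  if act q then lam q * ((F (sm q + 1) (S (t q)) - F (sm q - 1) (S (t q))) / 2) else 0.

Definition step (q : st) (b : bool) : st :=
  let s' := sm q + mv b in
  let n' := S (t q) in
  let W' := Wc q + bet q * mv b in
  if act q then
    (if Rle_dec s' (sqrt (INR n')) then mk n' s' W' true (lam q) else mk n' s' W' false (lam q))
  else
    (if Nat.leb Nst n' then
       (if Rle_dec s' (sqrt (INR n')) then mk n' s' W' true (W' / (2 * (F s' n' - Fmin)))
        else mk n' s' W' false (lam q))
     else mk n' s' W' false (lam q)).

Definition init : st := mk 0 0 1 false 0.
Definition run (l : list bool) : st := fold_left step l init.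
Definition P5 : strategy := fun l => bet (run l).

Lemma step_fields : forall q b, t (step q b) = S (t q) /\ sm (step q b) = sm q + mv b
  /\ Wc (step q b) = Wc q + bet q * mv b.
Proof. intros q b. unfold step. destruct (act q); [destruct Rle_dec|destruct (Nat.leb Nst _); [destruct Rle_dec|]];
  simpl; auto. Qed.

Lemma prefix_S : forall xi n, prefix xi (S n) = prefix xi n ++ xi n :: nil.
Proof. intros. unfold prefix. rewrite seq_S, map_app. reflexivity. Qed.

Lemma run_S : forall xi n, run (prefix xi (S n)) = step (run (prefix xi n)) (xi n).
Proof. intros. unfold run. rewrite prefix_S, fold_left_app. reflexivity. Qed.

Lemma run_spec : forall xi n, t (run (prefix xi n)) = n /\ sm (run (prefix xi n)) = s xi n
  /\ Wc (run (prefix xi n)) = 1 + capital P5 xi n.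
Proof. intros xi n. induction n as [|n IH].
  - simpl. unfold run, init. simpl. repeat split; ring.
  - rewrite run_S. destruct (step_fields (run (prefix xi n)) (xi n)) as (H1 & H2 & H3).
    destruct IH as (I1 & I2 & I3). rewrite H1, H2, H3, I1, I2, I3. simpl. unfold P5.
    repeat split; ring. Qed.

Definition Inv (q : st) : Prop := 0 < Wc q /\ (act q = true -> (Nst <= t q)%nat /\
  sm q <= sqrt (INR (t q)) /\ 0 < lam q /\ 0 < Wc q - lam q * (F (sm q) (t q) - Fmin)).

Lemma Fstart : forall s n, (1 <= n)%nat -> s <= sqrt (INR n) -> 0 < F s n - Fmin.
Proof. intros s n Hn Hs. pose proof (Flow3 s n Hn Hs).
  assert (ln (1/8) < ln (1/4)) by (apply ln_increasing; lra).
  assert (0 <= ln (INR n)) by (rewrite <- ln_1; apply ln_le'; [lra| apply (le_INR 1 n) in Hn; simpl in Hn; lra]).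
  unfold Fmin. lra. Qed.

Lemma Inv_step : forall q b, Inv q -> Inv (step q b).
Proof.
  intros q b [HW Hact]. unfold step. destruct (act q) eqn:Ea.
  - destruct (Hact eq_refl) as (Hn & Hs & Hl & Hk).
    assert (Hkey : 0 < Wc q + bet q * mv b - lam q * (F (sm q + mv b) (S (t q)) - Fmin)).
    { pose proof (Fsuper (sm q) (t q) Hn Hs) as Hsup. unfold bet; rewrite Ea.
      destruct b; simpl.
      - assert (lam q * ((F (sm q + 1) (S (t q)) + F (sm q - 1) (S (t q))) / 2) <= lam q * F (sm q) (t q))
          by (apply Rmult_le_compat_l; lra). nra.
      - replace (sm q + -1) with (sm q - 1) by ring.
        assert (lam q * ((F (sm q + 1) (S (t q)) + F (sm q - 1) (S (t q))) / 2) <= lam q * F (sm q) (t q))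
          by (apply Rmult_le_compat_l; lra). nra. }
    assert (Hlow : Fmin <= F (sm q + mv b) (S (t q))).
    { apply Flow2. unfold Nst in Hn; lia. destruct b; simpl; lra. }
    assert (HW' : 0 < Wc q + bet q * mv b) by nra.
    destruct Rle_dec as [Hle|Hle].
    + split; cbn [Wc act t sm lam]; [auto|]. intros _.
      split; [unfold Nst in *; lia|]. split; [exact Hle|]. split; auto.
    + split; cbn [Wc act t sm lam]; auto. discriminate.
  - destruct (Nat.leb Nst (S (t q))) eqn:El; [destruct Rle_dec as [Hle|Hle]|].
    + assert (Hbet : bet q = 0) by (unfold bet; rewrite Ea; reflexivity).
      apply Nat.leb_le in El.
      assert (Hp : 0 < F (sm q + mv b) (S (t q)) - Fmin) by (apply Fstart; [unfold Nst in El; lia|exact Hle]).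
      rewrite Hbet. split; cbn [Wc act t sm lam]. lra. intros _. repeat split; auto.
      * apply Rdiv_lt_0_compat; lra.
      * field_simplify; [|lra]. lra.
    + split; cbn [Wc act t sm lam]; [ unfold bet; rewrite Ea; lra | discriminate].
    + split; cbn [Wc act t sm lam]; [ unfold bet; rewrite Ea; lra | discriminate].
Qed.

Lemma Inv_run : forall xi n, Inv (run (prefix xi n)).
Proof. intros xi n. induction n. unfold Inv, run, init; simpl. split; [lra| discriminate].
  rewrite run_S. apply Inv_step; auto. Qed.

Lemma step_keep : forall q b, act q = true -> sm q + mv b <= sqrt (INR (S (t q))) ->
  act (step q b) = true /\ lam (step q b) = lam q.
Proof. intros q b Ea H. unfold step. rewrite Ea. destruct Rle_dec; [simpl; auto | contradiction]. Qed.

Lemma step_start : forall q b, act q = false -> (Nst <= S (t q))%nat -> sm q + mv b <= sqrt (INR (S (t q))) ->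
  act (step q b) = true.
Proof. intros q b Ea Hn H. unfold step. rewrite Ea. apply Nat.leb_le in Hn. rewrite Hn.
  destruct Rle_dec; [simpl; auto | contradiction]. Qed.

Lemma not_io : forall Q : nat -> Prop, ~ infinitely_often Q -> exists N, forall n, (N <= n)%nat -> ~ Q n.
Proof. intros Q H. unfold infinitely_often in H. apply not_all_ex_not in H. destruct H as [N HN].
  exists N. intros n Hn HQ. apply HN. exists n. auto. Qed.

Lemma sqrt_mono_nat : forall n, sqrt (INR n) - 1 <= sqrt (INR n). Proof. intros; lra. Qed.

Lemma E5_P5 : (forall xi n, capital P5 xi n >= -1) /\ (forall xi, ~ E5 xi -> limsup_infty (capital P5 xi)).
Proof.
  split.
  - intros xi n. destruct (Inv_run xi n) as [HW _]. destruct (run_spec xi n) as (_ & _ & H3). lra.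
  - intros xi HE C N'.
    destruct (not_io _ HE) as [N HN].
    assert (Hs : forall n, (N <= n)%nat -> s xi n <= sqrt (INR n)).
    { intros n Hn. specialize (HN n Hn). lra. }
    set (N1 := Nat.max N Nst).
    assert (Hk : forall k, act (run (prefix xi (S N1 + k))) = true /\
                         lam (run (prefix xi (S N1 + k))) = lam (run (prefix xi (S N1)))).
    { induction k as [|k IH].
      - rewrite Nat.add_0_r. split; [|reflexivity]. rewrite run_S.
        destruct (run_spec xi N1) as (T1 & S1 & _).
        assert (Hsx : sm (run (prefix xi N1)) + mv (xi N1) <= sqrt (INR (S (t (run (prefix xi N1)))))).
        { rewrite T1, S1. change (s xi N1 + mv (xi N1)) with (s xi (S N1)). apply Hs. lia. }
        destruct (act (run (prefix xi N1))) eqn:Ea.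
        + apply step_keep; auto.
        + apply step_start; auto. rewrite T1. lia.
      - destruct IH as [IA IL]. replace (S N1 + S k)%nat with (S (S N1 + k)) by lia.
        rewrite run_S. destruct (run_spec xi (S N1 + k)) as (T1 & S1 & _).
        assert (Hsx : sm (run (prefix xi (S N1 + k))) + mv (xi (S N1 + k)%nat)
                  <= sqrt (INR (S (t (run (prefix xi (S N1 + k))))))).
        { rewrite T1, S1. change (s xi (S N1 + k) + mv (xi (S N1 + k)%nat)) with (s xi (S (S N1 + k))).
          apply Hs. lia. }
        destruct (step_keep _ _ IA Hsx) as [A1 A2]. split; auto. rewrite A2; auto. }
    set (L := lam (run (prefix xi (S N1)))).
    assert (HL : 0 < L).
    { destruct (Inv_run xi (S N1)) as [_ HI]. destruct (Hk 0%nat) as [A _].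
      rewrite Nat.add_0_r in A. destruct (HI A) as (_ & _ & H & _). exact H. }
    destruct (INR_unbounded (exp (4 * Rabs (C + 1) / L))) as [m Hm].
    exists (S N1 + (m + N'))%nat. split; [lia|].
    set (n := (S N1 + (m + N'))%nat).
    destruct (Hk (m + N')%nat) as [A B]. fold n in A, B.
    destruct (Inv_run xi n) as [_ HI]. destruct (HI A) as (_ & _ & _ & Hpos).
    destruct (run_spec xi n) as (T1 & S1 & W1). rewrite T1, S1, W1, B in Hpos. fold L in Hpos.
    assert (Hn1 : (1 <= n)%nat) by (unfold n; lia).
    assert (Hsn : s xi n <= sqrt (INR n)) by (apply Hs; unfold n; lia).
    pose proof (Flow3 _ _ Hn1 Hsn) as HF.
    assert (ln (1/8) < ln (1/4)) by (apply ln_increasing; lra).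
    assert (Hmn : INR m <= INR n) by (apply le_INR; unfold n; lia).
    assert (Hln : 4 * Rabs (C + 1) / L <= ln (INR n)).
    { rewrite <- (ln_exp (4 * Rabs (C + 1) / L)). apply ln_le'. apply exp_pos. lra. }
    assert (Hab : C + 1 <= Rabs (C + 1)) by apply RRle_abs.
    assert (Hq : Rabs (C + 1) <= L * (ln (INR n) / 4)).
    { apply (Rmult_le_compat_l L) in Hln; [|lra]. field_simplify in Hln; [|lra]. lra. }
    assert (L * (ln (INR n) / 4) <= L * (F (s xi n) n - Fmin)).
    { apply Rmult_le_compat_l; [lra|]. unfold Fmin. lra. }
    lra.
Qed.

Definition P6 : strategy := fun l => - P5 (map negb l).

Lemma mv_neg : forall b, mv (negb b) = - mv b. Proof. destruct b; simpl; lra. Qed.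

Lemma prefix_neg : forall xi n, prefix (fun k => negb (xi k)) n = map negb (prefix xi n).
Proof. intros. unfold prefix. rewrite map_map. reflexivity. Qed.

Lemma cap_neg : forall xi n, capital P6 xi n = capital P5 (fun k => negb (xi k)) n.
Proof. intros xi n. induction n; simpl; [reflexivity|]. rewrite IHn, prefix_neg, mv_neg. unfold P6. ring. Qed.

Lemma s_neg : forall xi n, s (fun k => negb (xi k)) n = - s xi n.
Proof. intros xi n. induction n; simpl; [ring|]. rewrite IHn, mv_neg. ring. Qed.

Lemma E6_forced : weakly_forces E6.
Proof.
  destruct E5_P5 as [H1 H2].
  exists P6. split.
  - intros xi n. rewrite cap_neg. apply H1.
  - intros xi HE C N. 
    assert (HE' : ~ E5 (fun k => negb (xi k))).
    { intros H5. apply HE. intros M. destruct (H5 M) as [n [Hn Hq]]. exists n. split; auto.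
      rewrite s_neg in Hq. lra. }
    destruct (H2 _ HE' C N) as [n [Hn Hc]]. exists n. split; auto. rewrite cap_neg. exact Hc.
Qed.

Lemma E5_forced : weakly_forces E5.
Proof. exists P5. exact E5_P5. Qed.

Theorem theorem4 : weakly_forces E5 /\ weakly_forces E6.
Proof. split; [exact E5_forced | exact E6_forced]. Qed.
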